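(* Let $(Q,\cdot)$ be a Ward quasigroup with $xx=e$ for all $x\in Q$, and let $(Q,\ast)$ be a magma having a unique left unit $l$. If $(Q,\cdot,\ast)$ is a double magma, i.e. $(x\cdot y)\ast(z\cdot w)=(x\ast z)\cdot(y\ast w)$ for all $x,y,z,w\in Q$, then $l=e$.
   Context: A Ward quasigroup is a quasigroup $(Q,\cdot)$ (a magma in which $ax=b$ and $ya=b$ have unique solutions for all $a,b$) satisfying $(xz)(yz)=xy$ for all $x,y,z$; in it there is an element $e$ with $xx=e$ for all $x$. A left unit of $(Q,\ast)$ is an element $l$ with $l\ast x=x$ for all $x$. *)

(* Defs.v *)
Definition quasigroup {Q : Type} (mul : Q -> Q -> Q) : Prop :=
  (forall a b : Q, exists! x : Q, mul a x = b) /\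
  (forall a b : Q, exists! y : Q, mul y a = b).

Definition ward_quasigroup {Q : Type} (mul : Q -> Q -> Q) : Prop :=
  quasigroup mul /\
  (forall x y z : Q, mul (mul x z) (mul y z) = mul x y).

Definition left_unit {Q : Type} (ast : Q -> Q -> Q) (l : Q) : Prop :=
  forall x : Q, ast l x = x.

Definition double_magma {Q : Type} (mul ast : Q -> Q -> Q) : Prop :=
  forall x y z w : Q, ast (mul x y) (mul z w) = mul (ast x z) (ast y w).

(* Main.v *)
Require Import Defs.

Theorem proposition2p5 (Q : Type) (mul ast : Q -> Q -> Q) (e l : Q) :
  ward_quasigroup mul ->
  (forall x : Q, mul x x = e) ->
  left_unit ast l ->
  (forall l' : Q, left_unit ast l' -> l' = l) ->
  double_magma mul ast ->
  l = e.
Proof.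
  intros [[H1 H2] W] Hsq Hl Hu D.
  assert (Re : forall a, mul a e = a).
  { intro a. destruct (H1 a a) as [x [Hx _]].
    pose proof (W a x x) as Wa. rewrite Hsq, Hx in Wa. exact Wa. }
  symmetry. apply Hu. intro a.
  assert (E : ast (mul l l) (mul a e) = mul a e) by (rewrite D, !Hl; reflexivity).
  rewrite Hsq, Re in E. exact E.
Qed.
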